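(* Let $(\tau_i,u_i)_{i\in\mathbb Z}$ be a $C^1$-in-time solution of scheme (H) with $\tau_i>0$, and $(\bar\tau_i,\bar u_i)_{i\in\mathbb Z}$ a $C^1$-in-time solution of scheme (P) with $\bar\tau_i>0$ (same $\lambda$, $\sigma$, $\Delta x$). Then for every $i\in\mathbb Z$, $$\frac{d\eta_i^\varepsilon}{dt}+\frac{1}{\Delta x}(\psi_{i+1/2}-\psi_{i-1/2})=-\sigma(u_i-\bar u_i)^2+\frac1\sigma\,\frac{p(\bar\tau_{i+2})-2p(\bar\tau_i)+p(\bar\tau_{i-2})}{(2\Delta x)^2}\,p(\tau_i|\bar\tau_i)+\frac{\varepsilon^2}{\sigma}(u_i-\bar u_i)\frac{d}{dt}\Big(\frac{p(\bar\tau_{i+1})-p(\bar\tau_{i-1})}{2\Delta x}\Big)+R_i^u+R_i^\tau,$$ where $\psi_{i+1/2}=\frac12(u_i-\bar u_i)(p(\tau_{i+1})-p(\bar\tau_{i+1}))+\frac12(u_{i+1}-\bar u_{i+1})(p(\tau_i)-p(\bar\tau_i))$, $R_i^u=\frac{\lambda\varepsilon^2}{2\Delta x}(u_i-\bar u_i)(u_{i+1}-2u_i+u_{i-1})$, $R_i^\tau=-\frac{\lambda}{2\Delta x}\Big((p(\tau_i)-p(\bar\tau_i))(\tau_{i+1}-2\tau_i+\tau_{i-1})-(\tau_i-\bar\tau_i)p'(\bar\tau_i)(\bar\tau_{i+1}-2\bar\tau_i+\bar\tau_{i-1})\Big)$.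
   Context: The pressure $p\in C^2((0,\infty))$ satisfies $p>0$, $p'<0$. Fix $\tau_\star>0$, $P(\tau)=\int_{\tau_\star}^\tau p(s)ds$, $P(\tau|\bar\tau)=P(\tau)-P(\bar\tau)-p(\bar\tau)(\tau-\bar\tau)$, $p(\tau|\bar\tau)=p(\tau)-p(\bar\tau)-p'(\bar\tau)(\tau-\bar\tau)$. Parameters $\varepsilon,\sigma,\Delta x,\lambda>0$. Scheme (H): $\frac{d}{dt}\tau_i=\frac{1}{2\Delta x}(u_{i+1}-u_{i-1})+\frac{\lambda}{2\Delta x}(\tau_{i+1}-2\tau_i+\tau_{i-1})$, $\frac{d}{dt}u_i=\frac{\lambda}{2\Delta x}(u_{i+1}-2u_i+u_{i-1})-\frac{1}{2\varepsilon^2\Delta x}(p(\tau_{i+1})-p(\tau_{i-1}))-\frac{\sigma}{\varepsilon^2}u_i$. Scheme (P): $\frac{d}{dt}\bar\tau_i=\frac{1}{2\Delta x}(\bar u_{i+1}-\bar u_{i-1})+\frac{\lambda}{2\Delta x}(\bar\tau_{i+1}-2\bar\tau_i+\bar\tau_{i-1})$, $\sigma\bar u_i=-\frac{p(\bar\tau_{i+1})-p(\bar\tau_{i-1})}{2\Delta x}$. Discrete relative entropy $\eta_i^\varepsilon=\frac{\varepsilon^2}{2}(u_i-\bar u_i)^2-P(\tau_i|\bar\tau_i)$. *)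

(* Defs.v *)
From Stdlib Require Import Reals Lra ZArith ClassicalEpsilon.
Open Scope R_scope.

(* Riemann integral int_a^b f (oriented, as in Stdlib's RiemannInt, which is
   independent of the integrability proof by RiemannInt_P5);
   defaults to 0 if f is not Riemann integrable between a and b
   (never used in that case: p is continuous on (0,oo)). *)
Definition Rint (f : R -> R) (a b : R) : R :=
  match excluded_middle_informative (inhabited (Riemann_integrable f a b)) with
  | left H => RiemannInt (epsilon H (fun _ => True))
  | right _ => 0
  end.

Definition Pot (p : R -> R) (tau_star tau : R) : R := Rint p tau_star tau.

Definition Prel (p : R -> R) (tau_star tau taubar : R) : R :=
  Pot p tau_star tau - Pot p tau_star taubar - p taubar * (tau - taubar).

Definition prel (p dp : R -> R) (tau taubar : R) : R :=
  p tau - p taubar - dp taubar * (tau - taubar).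

Definition eta (p : R -> R) (tau_star eps : R)
  (tau u taubar ubar : Z -> R -> R) (i : Z) (t : R) : R :=
  eps ^ 2 / 2 * (u i t - ubar i t) ^ 2 - Prel p tau_star (tau i t) (taubar i t).

Definition psi (p : R -> R) (tau u taubar ubar : Z -> R -> R) (i : Z) (t : R) : R :=
  / 2 * (u i t - ubar i t) * (p (tau (i+1)%Z t) - p (taubar (i+1)%Z t))
  + / 2 * (u (i+1)%Z t - ubar (i+1)%Z t) * (p (tau i t) - p (taubar i t)).

(* Main.v *)
Require Import Defs.
From Stdlib Require Import Reals ZArith.
From Stdlib Require Import Lra ClassicalEpsilon FunctionalExtensionality.
From Coquelicot Require Import Coquelicot.
Open Scope R_scope.

Lemma Rint_RInt (f : R -> R) a b :
  (forall z, Rmin a b <= z <= Rmax a b -> continuity_pt f z) ->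
  Rint f a b = RInt f a b.
Proof.
  intros Hc.
  assert (He : ex_RInt f a b).
  { apply (@ex_RInt_continuous R_CompleteNormedModule). intros z Hz. apply continuity_pt_filterlim. now apply Hc. }
  pose proof (ex_RInt_Reals_0 _ _ _ He) as Hr.
  unfold Rint. destruct excluded_middle_informative as [H|H].
  - symmetry. apply RInt_Reals.
  - exfalso. apply H. now constructor.
Qed.

Lemma Pot_deriv (p dp : R -> R) ts x :
  0 < ts -> (forall x, 0 < x -> derivable_pt_lim p x (dp x)) -> 0 < x ->
  derivable_pt_lim (Pot p ts) x (p x).
Proof.
  intros Hts Hp Hx.
  assert (Hc : forall z, 0 < z -> continuity_pt p z).
  { intros z Hz. apply derivable_continuous_pt. exists (dp z). now apply Hp. }
  assert (Hloc : locally x (fun b => 0 < b)).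
  { apply (open_gt 0). exact Hx. }
  assert (Hcz : forall b, 0 < b -> forall z, Rmin ts b <= z <= Rmax ts b -> continuity_pt p z).
  { intros b Hb z Hz. apply Hc.
    assert (0 < Rmin ts b) by (apply Rmin_glb_lt; lra). lra. }
  apply is_derive_Reals.
  apply (is_derive_ext_loc (fun b => RInt p ts b)).
  - apply (filter_imp (fun b => 0 < b)); [|exact Hloc].
    intros b Hb. unfold Pot. symmetry. apply Rint_RInt. now apply Hcz.
  - apply (is_derive_RInt p (RInt p ts) ts x).
    + apply (filter_imp (fun b => 0 < b)); [|exact Hloc].
      intros b Hb. apply (@RInt_correct R_CompleteNormedModule). apply (@ex_RInt_continuous R_CompleteNormedModule).
      intros z Hz. apply continuity_pt_filterlim. now apply (Hcz b).
    + apply continuity_pt_filterlim. now apply Hc.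
Qed.

Lemma loc_int T0 T1 t : T0 < t < T1 -> locally t (fun s => T0 < s < T1).
Proof. intros H. apply (open_and _ _ (open_gt T0) (open_lt T1)). exact H. Qed.

Theorem lemma3p2
  (p dp ddp : R -> R) (tau_star eps sigma dx lambda : R)
  (Hts : 0 < tau_star) (Heps : 0 < eps) (Hsig : 0 < sigma)
  (Hdx : 0 < dx) (Hlam : 0 < lambda)
  (* p in C^2((0,oo)), p > 0, p' < 0 *)
  (Hp1 : forall x, 0 < x -> derivable_pt_lim p x (dp x))
  (Hp2 : forall x, 0 < x -> derivable_pt_lim dp x (ddp x))
  (Hp3 : forall x, 0 < x -> continuity_pt ddp x)
  (Hppos : forall x, 0 < x -> 0 < p x)
  (Hpneg : forall x, 0 < x -> dp x < 0)
  (* time interval (T0, T1) *)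
  (T0 T1 : R) (HT : T0 < T1)
  (tau u taubar ubar dtau du dtaubar dubar : Z -> R -> R)
  (* C^1 in time *)
  (Htau_d : forall i t, T0 < t < T1 -> derivable_pt_lim (tau i) t (dtau i t))
  (Hu_d : forall i t, T0 < t < T1 -> derivable_pt_lim (u i) t (du i t))
  (Htaubar_d : forall i t, T0 < t < T1 -> derivable_pt_lim (taubar i) t (dtaubar i t))
  (Hubar_d : forall i t, T0 < t < T1 -> derivable_pt_lim (ubar i) t (dubar i t))
  (Htau_c : forall i t, T0 < t < T1 -> continuity_pt (dtau i) t)
  (Hu_c : forall i t, T0 < t < T1 -> continuity_pt (du i) t)
  (Htaubar_c : forall i t, T0 < t < T1 -> continuity_pt (dtaubar i) t)
  (Hubar_c : forall i t, T0 < t < T1 -> continuity_pt (dubar i) t)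
  (* positivity *)
  (Htau_pos : forall i t, T0 < t < T1 -> 0 < tau i t)
  (Htaubar_pos : forall i t, T0 < t < T1 -> 0 < taubar i t)
  (* scheme (H) *)
  (HH1 : forall i t, T0 < t < T1 ->
     dtau i t = / (2 * dx) * (u (i+1)%Z t - u (i-1)%Z t)
       + lambda / (2 * dx) * (tau (i+1)%Z t - 2 * tau i t + tau (i-1)%Z t))
  (HH2 : forall i t, T0 < t < T1 ->
     du i t = lambda / (2 * dx) * (u (i+1)%Z t - 2 * u i t + u (i-1)%Z t)
       - / (2 * eps ^ 2 * dx) * (p (tau (i+1)%Z t) - p (tau (i-1)%Z t))
       - sigma / eps ^ 2 * u i t)
  (* scheme (P) *)
  (HP1 : forall i t, T0 < t < T1 ->
     dtaubar i t = / (2 * dx) * (ubar (i+1)%Z t - ubar (i-1)%Z t)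
       + lambda / (2 * dx) * (taubar (i+1)%Z t - 2 * taubar i t + taubar (i-1)%Z t))
  (HP2 : forall i t, T0 < t < T1 ->
     sigma * ubar i t = - ((p (taubar (i+1)%Z t) - p (taubar (i-1)%Z t)) / (2 * dx)))
  : forall (i : Z) (t : R), T0 < t < T1 ->
    exists deta dg : R,
      derivable_pt_lim (eta p tau_star eps tau u taubar ubar i) t deta /\
      derivable_pt_lim
        (fun s => (p (taubar (i+1)%Z s) - p (taubar (i-1)%Z s)) / (2 * dx)) t dg /\
      deta + / dx * (psi p tau u taubar ubar i t - psi p tau u taubar ubar (i-1)%Z t)
      = - sigma * (u i t - ubar i t) ^ 2
        + / sigma * ((p (taubar (i+2)%Z t) - 2 * p (taubar i t) + p (taubar (i-2)%Z t))
                     / (2 * dx) ^ 2) * prel p dp (tau i t) (taubar i t)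
        + eps ^ 2 / sigma * (u i t - ubar i t) * dg
        + lambda * eps ^ 2 / (2 * dx) * (u i t - ubar i t)
            * (u (i+1)%Z t - 2 * u i t + u (i-1)%Z t)
        - lambda / (2 * dx) *
            ((p (tau i t) - p (taubar i t)) * (tau (i+1)%Z t - 2 * tau i t + tau (i-1)%Z t)
             - (tau i t - taubar i t) * dp (taubar i t)
               * (taubar (i+1)%Z t - 2 * taubar i t + taubar (i-1)%Z t)).
Proof.
  intros i t Ht.
  set (g := fun s => (p (taubar (i+1)%Z s) - p (taubar (i-1)%Z s)) / (2 * dx)).
  assert (Hg : derivable_pt_lim g t (- sigma * dubar i t)).
  { apply is_derive_Reals.
    apply (is_derive_ext_loc (fun s => - sigma * ubar i s)).
    - apply (filter_imp (fun s => T0 < s < T1)); [|now apply loc_int].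
      intros s Hs. unfold g. change (- sigma * ubar i s = (p (taubar (i+1)%Z s) - p (taubar (i-1)%Z s)) / (2 * dx)).
      rewrite <- Ropp_mult_distr_l, HP2 by exact Hs. ring.
    - apply is_derive_Reals.
      apply (derivable_pt_lim_scal (ubar i) (- sigma)). now apply Hubar_d. }
  assert (Hw : derivable_pt_lim (fun s => u i s - ubar i s) t (du i t - dubar i t)).
  { apply (derivable_pt_lim_minus (u i) (ubar i)); auto. }
  assert (Hw2 : derivable_pt_lim (fun s => eps ^ 2 / 2 * (u i s - ubar i s) ^ 2) t
                  (eps ^ 2 / 2 * ((u i t - ubar i t) * (du i t - dubar i t)
                                 + (u i t - ubar i t) * (du i t - dubar i t)))).
  { apply (derivable_pt_lim_scal (fun s => (u i s - ubar i s) ^ 2)).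
    assert (E : (fun s => (u i s - ubar i s) ^ 2) =
                mult_fct (fun s => u i s - ubar i s) (fun s => u i s - ubar i s)).
    { apply functional_extensionality. intros s. unfold mult_fct. ring. }
    rewrite E. 
    replace ((u i t - ubar i t) * (du i t - dubar i t) + (u i t - ubar i t) * (du i t - dubar i t))
      with ((du i t - dubar i t) * (u i t - ubar i t) + (u i t - ubar i t) * (du i t - dubar i t)) by ring.
    exact (derivable_pt_lim_mult (fun s => u i s - ubar i s) (fun s => u i s - ubar i s) t _ _ Hw Hw). }
  assert (HP1' : derivable_pt_lim (fun s => Pot p tau_star (tau i s)) t (p (tau i t) * dtau i t)).
  { apply (derivable_pt_lim_comp (tau i) (Pot p tau_star)); auto.
    apply (Pot_deriv p dp); auto. }
  assert (HP2' : derivable_pt_lim (fun s => Pot p tau_star (taubar i s)) t (p (taubar i t) * dtaubar i t)).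
  { apply (derivable_pt_lim_comp (taubar i) (Pot p tau_star)); auto.
    apply (Pot_deriv p dp); auto. }
  assert (HP3' : derivable_pt_lim (fun s => p (taubar i s)) t (dp (taubar i t) * dtaubar i t)).
  { apply (derivable_pt_lim_comp (taubar i) p); auto. }
  assert (HP4' : derivable_pt_lim (fun s => p (taubar i s) * (tau i s - taubar i s)) t
     (dp (taubar i t) * dtaubar i t * (tau i t - taubar i t) + p (taubar i t) * (dtau i t - dtaubar i t))).
  { apply (derivable_pt_lim_mult (fun s => p (taubar i s)) (fun s => tau i s - taubar i s)); auto.
    apply (derivable_pt_lim_minus (tau i) (taubar i)); auto. }
  assert (Heta : derivable_pt_lim (eta p tau_star eps tau u taubar ubar i) t
     (eps ^ 2 / 2 * ((u i t - ubar i t) * (du i t - dubar i t)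
                                 + (u i t - ubar i t) * (du i t - dubar i t))
      - (p (tau i t) * dtau i t - p (taubar i t) * dtaubar i t
         - (dp (taubar i t) * dtaubar i t * (tau i t - taubar i t) + p (taubar i t) * (dtau i t - dtaubar i t))))).
  { unfold eta, Prel.
    apply (derivable_pt_lim_minus (fun s => eps ^ 2 / 2 * (u i s - ubar i s) ^ 2)
       (fun s => Pot p tau_star (tau i s) - Pot p tau_star (taubar i s) -
                 p (taubar i s) * (tau i s - taubar i s))); auto.
    apply (derivable_pt_lim_minus (fun s => Pot p tau_star (tau i s) - Pot p tau_star (taubar i s))
        (fun s => p (taubar i s) * (tau i s - taubar i s))); auto.
    apply (derivable_pt_lim_minus (fun s => Pot p tau_star (tau i s)) (fun s => Pot p tau_star (taubar i s))); auto. }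
  eexists; eexists; split; [exact Heta|]; split; [exact Hg|].
  unfold psi, prel.
  assert (Z1 : (i - 1 + 1 = i)%Z) by ring.
  assert (Z2 : (i + 1 + 1 = i + 2)%Z) by ring.
  assert (Z3 : (i + 1 - 1 = i)%Z) by ring.
  assert (Z4 : (i - 1 - 1 = i - 2)%Z) by ring.
  pose proof (HP2 (i+1)%Z t Ht) as A1. rewrite Z2, Z3 in A1.
  pose proof (HP2 (i-1)%Z t Ht) as A2. rewrite Z1, Z4 in A2.
  pose proof (HP2 i t Ht) as A3.
  rewrite Z1.
  rewrite (HH1 i t Ht), (HH2 i t Ht), (HP1 i t Ht).
  assert (Hs : sigma <> 0) by lra.
  assert (B1 : ubar (i+1)%Z t = - ((p (taubar (i + 2)%Z t) - p (taubar i t)) / (2 * dx)) / sigma)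
    by (rewrite <- A1; field; auto).
  assert (B2 : ubar (i-1)%Z t = - ((p (taubar i t) - p (taubar (i - 2)%Z t)) / (2 * dx)) / sigma)
    by (rewrite <- A2; field; auto).
  assert (B3 : ubar i t = - ((p (taubar (i + 1)%Z t) - p (taubar (i - 1)%Z t)) / (2 * dx)) / sigma)
    by (rewrite <- A3; field; auto).
  rewrite B1, B2, B3.
  field. split; lra.
Qed.
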